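(* Let $n\ge 3$ be an integer and let $C_n$ denote the cycle on $n$ vertices. For any $x\in\mathbb{N}$ and any integer $y$ with $0\le y\le x$, \[ P(C_n,x,y) = \left( \frac{x - 1 - \sqrt{(x+1)^2-4y} }{2} \right)^{n} + \left( \frac{x - 1 + \sqrt{(x+1)^2-4y}}{2} \right)^{n} + (-1)^{n} (y - 1). \]
   Context: For a finite simple graph $G=(V,E)$, $x\in\mathbb{N}$ and $y\in\{0,\dots,x\}$, the bivariate chromatic polynomial $P(G,x,y)$ is the number of maps $f:V\to\{1,\dots,x\}$ such that for every edge $\{v,w\}\in E$, either $f(v)\neq f(w)$ or $f(v)=f(w)>y$. (Equivalently: colorings in which adjacent vertices receive different colors or share a color from $\{y+1,\dots,x\}$.) *)

(* Defs.v *)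
From mathcomp Require Import all_boot all_order all_algebra.
Set Implicit Arguments. Unset Strict Implicit. Unset Printing Implicit Defensive.

(* A finite simple graph is given by a symmetric irreflexive relation [e]
   on a finite vertex type [V]. Colours {1,...,x} are represented by 'I_x,
   colour c : 'I_x standing for c+1; thus "f v > y" becomes "y <= f v". *)
Definition bivariate_chromatic (V : finType) (e : rel V) (x y : nat) : nat :=
  #|[set f : {ffun V -> 'I_x} |
      [forall v, forall w, e v w ==> ((f v != f w) || (y <= f v))]]|.

Definition cycle_rel (n : nat) : rel 'I_n :=
  fun i j => (nat_of_ord j == i.+1 %% n) || (nat_of_ord i == j.+1 %% n).

(* Main.v *)
Require Import Defs.
From mathcomp Require Import all_boot all_order all_algebra.
From mathcomp Require Import ring lra.
Import Order.TTheory GRing.Theory Num.Theory.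
Local Open Scope ring_scope.

Section Split.
Variables (R : nzRingType) (T : finType) (k : nat).

Definition ext (g : {ffun 'I_k.+1 -> T}) (c : T) : {ffun 'I_k.+2 -> T} :=
  [ffun i => if unlift ord_max i is Some j then g j else c].

Definition restr (f : {ffun 'I_k.+2 -> T}) : {ffun 'I_k.+1 -> T} :=
  [ffun j => f (lift ord_max j)].

Lemma ext_max g c : ext g c ord_max = c.
Proof. by rewrite ffunE unlift_none. Qed.

Lemma ext_lift g c j : ext g c (lift ord_max j) = g j.
Proof. by rewrite ffunE liftK. Qed.

Lemma ext_val (j : 'I_k.+1) g c (i : 'I_k.+2) : (i : nat) = j -> ext g c i = g j.
Proof.
move=> e; have -> : i = lift ord_max j by apply: val_inj; rewrite /= /bump leqNgt ltn_ord add0n.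
exact: ext_lift.
Qed.

Lemma split_sum (F : {ffun 'I_k.+2 -> T} -> R) :
  \sum_f F f = \sum_(g : {ffun 'I_k.+1 -> T}) \sum_(c : T) F (ext g c).
Proof.
rewrite pair_big /=.
rewrite (reindex (fun p : {ffun 'I_k.+1 -> T} * T => ext p.1 p.2)) //=.
exists (fun f => (restr f, f ord_max)) => [[g c] _ | f _] /=.
  rewrite ext_max; congr (_, _); apply/ffunP => j; by rewrite ffunE ext_lift.
apply/ffunP => i; rewrite ffunE.
case: unliftP => [j ->|->]; last by [].
by rewrite ffunE.
Qed.
End Split.
Arguments ext_val {T k} j {g c i}.
Arguments ext {T k}.

Section Walks.
Variables (R : rcfType) (x y : nat).

Definition Am (b c : 'I_x) : R := 1 - ((b == c) && (c < y)%N)%:R.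

Fixpoint W k (a c : 'I_x) : R :=
  match k with 0 => (a == c)%:R | k'.+1 => \sum_b W k' a b * Am b c end.

Definition V k (a b : 'I_x) : R :=
  \sum_(f : {ffun 'I_k.+1 -> 'I_x} | (f ord0 == a) && (f ord_max == b))
    \prod_(i < k) Am (f (widen_ord (leqnSn _) i)) (f (lift ord0 i)).

Lemma V_W k a b : V k a b = W k a b.
Proof.
elim: k a b => [|k IH] a b.
  rewrite /V /=; case: (eqVneq a b) => [<-|nab].
    rewrite (big_pred1 [ffun=> a]) ?big_ord0 // => f /=.
    apply/idP/eqP => [/andP[/eqP f0 _]|->]; last by rewrite !ffunE eqxx.
    by apply/ffunP => i; rewrite ffunE ord1.
  rewrite big_pred0 // => f; apply/negP => /andP[/eqP f0 /eqP f1].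
  by move/eqP: nab; apply; rewrite -f0 -f1; congr (f _); apply: val_inj.
rewrite /= /V big_mkcond split_sum.
under [LHS]eq_bigr => g _.

  rewrite (bigD1 b) //= [X in _ + X]big1 ?addr0; last first.
    by move=> c ncb; rewrite ext_max (negbTE ncb) andbF.
  rewrite ext_max eqxx andbT ((ext_val (ord0))) //.
  rewrite big_ord_recr /=.
  rewrite (ext_val ord_max) //.
  have -> : lift ord0 (ord_max : 'I_k.+1) = ord_max :> 'I_k.+2 by apply: val_inj.
  rewrite ext_max.
  under eq_bigr => i _ do
    rewrite (ext_val (widen_ord (leqnSn _) i)) // (ext_val (lift ord0 i)) //.
  over.
rewrite /= -big_mkcond /=.
rewrite (partition_big (fun g : {ffun 'I_k.+1 -> 'I_x} => g ord_max) predT) //=.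
apply: eq_bigr => c _; rewrite -IH /V big_distrl /=.
apply: eq_big => [g|g /andP[_ /eqP ->]] //.
Qed.


Lemma cyc_sum k : \sum_(f : {ffun 'I_k.+1 -> 'I_x}) \prod_(i < k.+1) Am (f i) (f (ordS i))
  = \sum_a W k.+1 a a.
Proof.
rewrite (partition_big (fun f : {ffun 'I_k.+1 -> 'I_x} => f ord0) predT) //=.
apply: eq_bigr => a _ /=.
rewrite (partition_big (fun f : {ffun 'I_k.+1 -> 'I_x} => f ord_max) predT) //=.
apply: eq_bigr => b _; rewrite -V_W /V big_distrl /=.
apply: eq_big => [f|f /andP[/eqP f0 /eqP fm]] //.
rewrite big_ord_recr /= -f0 -fm; congr (_ * _).
  apply: eq_bigr => i _; congr (Am _ (f _)); apply: val_inj => /=.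
  by rewrite modn_small // ltnS.
by congr (Am _ (f _)); apply: val_inj; rewrite /= modnn.
Qed.

Lemma prod01 (I : finType) (b : I -> bool) :
  \prod_i (1 - (b i)%:R) = (if [forall i, ~~ b i] then 1 else 0) :> R.
Proof.
case: forallP => [H|H]; first by rewrite big1 // => i _; rewrite (negbTE (H i)) subr0.
have [i bi] : exists i, b i by apply/existsP; rewrite -[X in is_true X]negbK negb_exists; apply/forallP.
by rewrite (bigD1 i) //= bi subrr mul0r.
Qed.

Lemma count_eq k :
  (@bivariate_chromatic 'I_k.+1 (@cycle_rel k.+1) x y)%:R =
  \sum_(f : {ffun 'I_k.+1 -> 'I_x}) \prod_(i < k.+1) Am (f i) (f (ordS i)).
Proof.
rewrite /bivariate_chromatic -sum1_card natr_sum big_mkcond /=.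
apply: eq_bigr => f _; rewrite inE /Am prod01.
congr (if _ then _ else _).
apply/forallP/forallP => [H i|H v].
  have /forallP/(_ (ordS i)) := H i; rewrite /cycle_rel /= eqxx /=.
  by case: eqP => //= ->; rewrite ltnNge => ->.
apply/forallP => w; apply/implyP; rewrite /cycle_rel => /orP[] /eqP e.
  have -> : w = ordS v by apply: val_inj.
  by have := H v; case: eqP => //= -> ; rewrite -leqNgt.
have -> : v = ordS w by apply: val_inj.
by have := H w; rewrite eq_sym; case: eqP => //= _; rewrite -leqNgt.
Qed.



Definition S k a := \sum_b W k a b.
Definition SY k a := \sum_(b : 'I_x | (b < y)%N) W k a b.

Lemma sumY (F : 'I_x -> R) : \sum_(c : 'I_x) (c < y)%N%:R * F c = \sum_(c : 'I_x | (c < y)%N) F c.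
Proof. by rewrite [RHS]big_mkcond; apply: eq_bigr => c _; case: ifP; rewrite ?mul1r ?mul0r. Qed.

Lemma W_succ k a c : W k.+1 a c = S k a - (c < y)%N%:R * W k a c.
Proof.
rewrite /= /S /Am; under eq_bigr do rewrite mulrBr mulr1; rewrite sumrB; congr (_ - _).
rewrite (bigD1 c) //= big1 ?addr0 => [|b nb]; first by rewrite eqxx /= mulrC.
by rewrite (negbTE nb) mulr0.
Qed.

Lemma S_succ k a : S k.+1 a = x%:R * S k a - SY k a.
Proof.
rewrite {1}/S; under eq_bigr do rewrite W_succ; rewrite sumrB sumr_const card_ord sumY.
by rewrite mulr_natl.
Qed.

Hypothesis hy : (y <= x)%N.

Lemma sumYc (K : R) : \sum_(c : 'I_x | (c < y)%N) K = y%:R * K.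
Proof.
have := @big_ord_narrow_cond R 0 +%R y x predT (fun _ => K) hy.
rewrite /= => ->; by rewrite sumr_const card_ord mulr_natl.
Qed.

Lemma SY_succ k a : SY k.+1 a = y%:R * S k a - SY k a.
Proof.
rewrite {1}/SY; under eq_bigr do rewrite W_succ; rewrite sumrB sumYc; congr (_ - _).
by rewrite /SY; apply: eq_bigr => c ->; rewrite mul1r.
Qed.

Definition rec2 (s : nat -> R) :=
  forall k, s k.+2 = (x%:R - 1) * s k.+1 + (x%:R - y%:R) * s k.

Lemma S_rec2 (P : pred 'I_x) : rec2 (fun k => \sum_(a | P a) S k a).
Proof.
move=> k; rewrite mulr_sumr mulr_sumr -big_split /=; apply: eq_bigr => a _.
rewrite S_succ SY_succ.
have e : SY k a = x%:R * S k a - S k.+1 a by rewrite S_succ; ring.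
rewrite e; ring.
Qed.

Lemma rec2_alt (c h : nat -> R) : rec2 c -> (forall k, h k.+1 = c k - h k) ->
  h 2 = (x%:R - 1) * h 1 + (x%:R - y%:R) * h 0 -> rec2 h.
Proof.
move=> rc hh h0 k; elim: k => [//|k IH].
rewrite (hh k.+2) rc [in LHS]IH (hh k.+1) (hh k); ring.
Qed.

Definition Tr k := \sum_(a : 'I_x) W k a a.
Definition TY k := \sum_(a : 'I_x | (a < y)%N) W k a a.

Lemma Tr_succ k : Tr k.+1 = \sum_a S k a - TY k.
Proof. by rewrite /Tr; under eq_bigr do rewrite W_succ; rewrite sumrB sumY. Qed.

Lemma TY_succ k : TY k.+1 = \sum_(a : 'I_x | (a < y)%N) S k a - TY k.
Proof.
rewrite /TY; under eq_bigr => a ay do rewrite W_succ ay mul1r; by rewrite sumrB.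
Qed.

Lemma S0 a : S 0 a = 1.
Proof. by rewrite /S /= (bigD1 a) //= eqxx big1 ?addr0 // => b nb; rewrite eq_sym (negbTE nb). Qed.

Lemma SY0 a : SY 0 a = (a < y)%N%:R.
Proof.
rewrite /SY /=; case: (boolP (a < y)%N) => ay.
  by rewrite (bigD1 a) //= eqxx big1 ?addr0 // => b /andP[_ nb]; rewrite eq_sym (negbTE nb).
by rewrite big1 // => b yb; case: eqP => // e; rewrite e yb in ay.
Qed.

Lemma TY0 : TY 0 = y%:R.
Proof. by rewrite /TY /=; under eq_bigr do rewrite eqxx; rewrite sumYc mulr1. Qed.

Lemma TY1 : TY 1 = 0.
Proof. by rewrite TY_succ TY0; under eq_bigr do rewrite S0; rewrite sumYc mulr1 subrr. Qed.

Lemma TY2 : TY 2 = y%:R * (x%:R - 1).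
Proof.
rewrite TY_succ TY1 subr0 -sumYc; apply: eq_bigr => a ay.
by rewrite S_succ S0 SY0 ay mulr1.
Qed.

Lemma sumS0 : \sum_a S 0 a = x%:R.
Proof. by under eq_bigr do rewrite S0; rewrite sumr_const card_ord. Qed.

Lemma sumS1 : \sum_a S 1 a = x%:R * x%:R - y%:R.
Proof.
under eq_bigr do rewrite S_succ S0 SY0 mulr1; rewrite sumrB sumr_const card_ord mulr_natl.
congr (_ - _); rewrite -[RHS]mulr1 -sumYc -sumY; by apply: eq_bigr => a _; rewrite mulr1.
Qed.

Definition eps k : R := (-1) ^+ k * (y%:R - 1).

Lemma Hp_rec2 : rec2 (fun k => TY k - eps k).
Proof.
apply: (@rec2_alt _ (fun k => TY k - eps k) (S_rec2 (fun a : 'I_x => (a < y)%N))) => [k|] /=.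
  by rewrite TY_succ /eps exprS; ring.
rewrite TY2 TY1 TY0 /eps /= expr0 expr1 expr2; ring.
Qed.

Lemma epsS k : eps k.+1 = - eps k.
Proof. by rewrite /eps exprS mulN1r mulNr. Qed.

Lemma H_rec2 : rec2 (fun k => Tr k.+1 - eps k.+1).
Proof.
move=> k; rewrite !Tr_succ.
have h1 := S_rec2 predT k; have h2 := canRL (subrK _) (Hp_rec2 k).
rewrite /= in h1 h2; rewrite h1 h2 !epsS; ring.
Qed.

End Walks.

Lemma rec2_uniq (R : rcfType) x y (s1 s2 : nat -> R) : rec2 R x y s1 -> rec2 R x y s2 ->
  s1 0 = s2 0 -> s1 1 = s2 1 -> forall k, s1 k = s2 k.
Proof.
move=> r1 r2 e0 e1 k.
suff : s1 k = s2 k /\ s1 k.+1 = s2 k.+1 by case.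
elim: k => [//|k [IH1 IH2]]; split => //.
by rewrite r1 r2 IH1 IH2.
Qed.

Theorem theorem2 (R : rcfType) (n x y : nat) (hn : (3 <= n)%N) (hy : (y <= x)%N) :
  (@bivariate_chromatic 'I_n (@cycle_rel n) x y)%:R =
    ((x%:R - 1 - Num.sqrt ((x%:R + 1) ^+ 2 - 4 * y%:R)) / 2) ^+ n
  + ((x%:R - 1 + Num.sqrt ((x%:R + 1) ^+ 2 - 4 * y%:R)) / 2) ^+ n
  + (-1) ^+ n * (y%:R - 1) :> R.
Proof.
case: n hn => [//|k] _.
set s := Num.sqrt _.
set l1 := (_ - s) / 2; set l2 := (_ + s) / 2.
have hyR : (y%:R <= x%:R :> R) by rewrite ler_nat.
have hd : 0 <= (x%:R + 1) ^+ 2 - 4 * y%:R :> R.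
  have : 0 <= (x%:R - 1) ^+ 2 :> R by apply: sqr_ge0.
  move=> h; nra.
have hs : s ^+ 2 = (x%:R + 1) ^+ 2 - 4 * y%:R by rewrite /s sqr_sqrtr.
have q1 : l1 ^+ 2 = (x%:R - 1) * l1 + (x%:R - y%:R).
  rewrite /l1; apply/eqP; rewrite -subr_eq0; apply/eqP.
  have -> : ((x%:R - 1 - s) / 2) ^+ 2 - ((x%:R - 1) * ((x%:R - 1 - s) / 2) + (x%:R - y%:R))
     = (s ^+ 2 - ((x%:R + 1) ^+ 2 - 4 * y%:R)) / 4 :> R by field.
  by rewrite hs subrr mul0r.
have q2 : l2 ^+ 2 = (x%:R - 1) * l2 + (x%:R - y%:R).
  rewrite /l2; apply/eqP; rewrite -subr_eq0; apply/eqP.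
  have -> : ((x%:R - 1 + s) / 2) ^+ 2 - ((x%:R - 1) * ((x%:R - 1 + s) / 2) + (x%:R - y%:R))
     = (s ^+ 2 - ((x%:R + 1) ^+ 2 - 4 * y%:R)) / 4 :> R by field.
  by rewrite hs subrr mul0r.
have rG : rec2 R x y (fun k => l1 ^+ k.+1 + l2 ^+ k.+1).
  have p l (ql : l ^+ 2 = (x%:R - 1) * l + (x%:R - y%:R)) j :
      l ^+ j.+3 = (x%:R - 1) * l ^+ j.+2 + (x%:R - y%:R) * l ^+ j.+1 :> R.
    by rewrite -addn2 exprD ql (exprSr l j.+1); ring.
  by move=> j /=; rewrite (p _ q1) (p _ q2); ring.
have e : forall j, Tr R x y j.+1 - eps R y j.+1 = l1 ^+ j.+1 + l2 ^+ j.+1.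
  apply: (@rec2_uniq R x y _ _ (@H_rec2 R x y hy) rG) => /=.
    rewrite Tr_succ sumS0 (@TY0 R x y hy) /eps expr1 /l1 /l2; by field.
  rewrite Tr_succ (@sumS1 R x y hy) (@TY1 R x y hy) /eps !expr2 /l1 /l2.
  have -> : (x%:R - 1 - s) / 2 * ((x%:R - 1 - s) / 2) + (x%:R - 1 + s) / 2 * ((x%:R - 1 + s) / 2)
     = ((x%:R - 1) ^+ 2 + s ^+ 2) / 2 :> R by field.
  by rewrite hs; field.
rewrite count_eq cyc_sum.
change (Tr R x y k.+1 = l1 ^+ k.+1 + l2 ^+ k.+1 + (-1) ^+ k.+1 * (y%:R - 1)).
by rewrite -(subrK (eps R y k.+1) (Tr R x y k.+1)) e.
Qed.
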